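(* Let $G_1=\langle\Sigma_{1,\tau},Q_1,\rightarrow_1,Q_1^0\rangle$ and $G_2=\langle\Sigma_{2,\tau},Q_2,\rightarrow_2,Q_2^0\rangle$ be nondeterministic automata with sets of secret states $Q_1^S$, $Q_2^S$, and equip $G_1\|G_2$ with secret states $Q^S=\{(x_1,x_2)\mid x_1\in Q_1^S\text{ or }x_2\in Q_2^S\}$. Assume $UR(Q_i^0)\not\subseteq Q_i^S$ for $i=1,2$. For $i=1,2$ let $T_i=TPO(det_d(G_i),det(G_i))$ be the largest three-player observer w.r.t. $G_i$, and let $G_i^T$ be the transformed automaton of $T_i$ (with $j\ne i$ the other index). Let $T=TPO(det_d(G_1\|G_2),det(G_1\|G_2))$ be the largest monolithic three-player observer w.r.t. $G_1\|G_2$, and let $\rho$ be the renaming map. Then for every string $s$ over $\Sigma_{G_1^T}\cup\Sigma_{G_2^T}$: if $s$ is defined from the initial state of $G_1^T\|G_2^T$, then $\rho(s)$ labels a path from the initial state of $T$.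
   Context: Automata: a (nondeterministic) automaton $G=\langle\Sigma_\tau,Q,\rightarrow,Q^0\rangle$ has finite observable alphabet $\Sigma$, special unobservable symbol $\tau$, $\Sigma_\tau=\Sigma\cup\{\tau\}$, $\rightarrow\subseteq Q\times\Sigma_\tau\times Q$, initial states $Q^0$. Deterministic: one initial state, no $\tau$-transitions, functional. $p\overset{s}{\Rightarrow}q$ ($s\in\Sigma^*$): a path from $p$ to $q$ whose labels with $\tau$'s deleted spell $s$. $UR(B)=\{q\mid b\overset{\varepsilon}{\Rightarrow}q,\ b\in B\}$. Observer $det(G)$: deterministic over $\Sigma$, initial state $UR(Q^0)$, $X\xrightarrow{\sigma}Y$ iff $Y=UR(\{y\mid x\xrightarrow{\sigma}y,\ x\in X\})\ne\emptyset$, reachable part. Desired observer $det_d(G)$: $det(G)$ with every state $X\subseteq Q^S$ deleted, reachable part kept. Synchronous composition of $A_1$ (alphabet $\Sigma_1$) and $A_2$ (alphabet $\Sigma_2$): state set $Q_1\times Q_2$, initial states $Q_1^0\times Q_2^0$, marked states $Q_1^m\times Q_2^m$ (when marking is present); shared events ($\Sigma_1\cap\Sigma_2$) move both components simultaneously, events in $(\Sigma_1\setminus\Sigma_2)\cup\{\tau\}$ move only the first, events in $(\Sigma_2\setminus\Sigma_1)\cup\{\tau\}$ move only the second. Largest three-player observer $TPO(D,F)$ for deterministic $D=\langle\Sigma,X_D,\rightarrow_D,d_0\rangle$, $F=\langle\Sigma,X_F,\rightarrow_F,f_0\rangle$: with fresh symbol $\epsilon$ and fresh erasure symbols $\Sigma^r=\{\sigma\to\epsilon\mid\sigma\in\Sigma\}$,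 states are $Y$-states $(d,f)$, $Z$-states $Z((d,f),e)$ ($e\in\Sigma$, called the observable component $E$), $W$-states $W((d,f),a)$ ($a\in\Sigma\cup\Sigma^r$, called the action component $A$); initial state $(d_0,f_0)$; only reachable states; transitions exactly: (1) $(d,f)\xrightarrow{e}Z((d,f),e)$ if $e$ defined at $f$ in $F$; (2) $Z((d,f),e)\xrightarrow{\theta}Z((d',f),e)$ for $\theta\in\Sigma$ if $d\xrightarrow{\theta}_Dd'$; (3) $Z((d,f),e)\xrightarrow{\epsilon}W((d,f),e)$ if $e$ defined at $d$ in $D$ and at $f$ in $F$; (4) $Z((d,f),e)\xrightarrow{e\to\epsilon}W((d,f),e\to\epsilon)$ if $e$ defined at $f$ in $F$; (5) $W((d,f),e)\xrightarrow{e}(d',f')$ with $d\xrightarrow{e}_Dd'$, $f\xrightarrow{e}_Ff'$; (6) $W((d,f),e\to\epsilon)\xrightarrow{e}(d,f')$ with $f\xrightarrow{e}_Ff'$. Transformed automaton: for $T_i=TPO(D_i,F_i)$ over alphabet $\Sigma_i$ and the other index $j$, introduce fresh formal symbols $\theta_e$ (for $\theta\in\Sigma_i\cup\Sigma_j\cup\{\epsilon\}\cup\Sigma_i^r\cup\Sigma_j^r$, $e\in\Sigma_i\cup\Sigma_j$) and $\sigma_{a,w}$ (for $\sigma$ an event and $a$ an event or erasure symbol), all distinct from each other and from events. Let $E_i$ be the set of observable components of $Z$-states of $T_i$ and $A_i$ the set of action components of $W$-states of $T_i$. $G_i^T$ is the deterministic automaton with the same states as $T_i$, initial state the initial $Y$-state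 of $T_i$, marked states all $Y$-states, and transitions: (a) $y\xrightarrow{e}z$ for each transition $y\xrightarrow{e}z$ of $T_i$ out of a $Y$-state; (b) $z\xrightarrow{\theta_e}q$ for each transition $z\xrightarrow{\theta}q$ of $T_i$ out of a $Z$-state $z$ with observable component $e$; (c) $w\xrightarrow{e_{a,w}}y$ for each transition $w\xrightarrow{e}y$ of $T_i$ out of a $W$-state $w$ with action component $a$; (d) a self-loop $y\xrightarrow{\alpha}y$ at every $Y$-state $y$ for every $\alpha\in\Sigma_j\setminus\Sigma_i$. Its alphabet is $\Sigma_{G_i^T}=\Sigma_i\cup(\Sigma_j\setminus\Sigma_i)\cup\{\theta_e\mid\theta\in\Sigma_i\cup\{\epsilon\}\cup\Sigma_i^r,\ e\in E_i\}\cup\{\sigma_{a,w}\mid\sigma\in\Sigma_i,\ a\in A_i\}\cup\{\beta_\alpha,\ \beta_{\alpha,w},\ \beta_{\alpha\to\epsilon,w}\mid\beta\in\Sigma_i\cap\Sigma_j,\ \alpha\in\Sigma_j\setminus\Sigma_i\}$. Renaming: $\rho$ maps each event $e$ to $e$, each $\theta_e$ to $\theta$, and each $\sigma_{a,w}$ to $\sigma$, extended letter-by-letter to strings. *)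

(* Defs.v *)
From HB Require Import structures.
From mathcomp Require Import all_boot.
From Stdlib Require List.
Set Implicit Arguments. Unset Strict Implicit. Unset Printing Implicit Defensive.

(* Events range over a finite universe E; the observable alphabet is [alph].  *)
Record nfa (E Q : finType) := Nfa {
  alph : {set E};
  ntrans : Q -> option E -> Q -> bool;   (* None = tau *)
  ninit : {set Q};
  nsecret : {set Q} }.

(* transition relation is a subset of Q x Sigma_tau x Q *)
Definition nfa_wf (E Q : finType) (G : nfa E Q) : Prop :=
  forall p e q, ntrans G p (Some e) q -> e \in alph G.

Definition tau_rel (E Q : finType) (G : nfa E Q) : rel Q :=
  fun p q => ntrans G p None q.

Definition UR (E Q : finType) (G : nfa E Q) (B : {set Q}) : {set Q} :=
  [set q | [exists b in B, connect (tau_rel G) b q]].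

Definition post (E Q : finType) (G : nfa E Q) (X : {set Q}) (e : E) : {set Q} :=
  [set y | [exists x in X, ntrans G x (Some e) y]].

Record dfa (E X : Type) := Dfa { dstep : X -> E -> option X; dinit : X }.

Definition det_step (E Q : finType) (G : nfa E Q) (X : {set Q}) (e : E)
  : option {set Q} :=
  let Y := UR G (post G X e) in
  if (e \in alph G) && (Y != set0) then Some Y else None.

Definition det (E Q : finType) (G : nfa E Q) : dfa E {set Q} :=
  Dfa (det_step G) (UR G (ninit G)).

Definition det_d (E Q : finType) (G : nfa E Q) : dfa E {set Q} :=
  Dfa (fun X e => match det_step G X e with
                  | Some Y => if Y \subset nsecret G then None else Some Y
                  | None => None end)
      (UR G (ninit G)).

Definition sync_trans (E Q1 Q2 : finType) (G1 : nfa E Q1) (G2 : nfa E Q2)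
  (p : Q1 * Q2) (l : option E) (q : Q1 * Q2) : bool :=
  match l with
  | None => (ntrans G1 p.1 None q.1 && (q.2 == p.2))
            || (ntrans G2 p.2 None q.2 && (q.1 == p.1))
  | Some e =>
    if (e \in alph G1) && (e \in alph G2) then
      ntrans G1 p.1 (Some e) q.1 && ntrans G2 p.2 (Some e) q.2
    else if e \in alph G1 then ntrans G1 p.1 (Some e) q.1 && (q.2 == p.2)
    else if e \in alph G2 then ntrans G2 p.2 (Some e) q.2 && (q.1 == p.1)
    else false
  end.

Definition nsync (E Q1 Q2 : finType) (G1 : nfa E Q1) (G2 : nfa E Q2)
  : nfa E (Q1 * Q2)%type :=
  Nfa (alph G1 :|: alph G2) (sync_trans G1 G2)
      (setX (ninit G1) (ninit G2))
      [set x | (x.1 \in nsecret G1) || (x.2 \in nsecret G2)].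

Inductive act (E : Type) := AEv of E | AEr of E.           (* e  /  e -> eps *)
Inductive tlabel (E : Type) := LEv of E | LEps | LEr of E.
Inductive tstate (XD XF E : Type) :=
  | TY of XD & XF
  | TZ of XD & XF & E
  | TW of XD & XF & act E.
Arguments AEv {E}. Arguments AEr {E}.
Arguments LEv {E}. Arguments LEps {E}. Arguments LEr {E}.
Arguments TY {XD XF E}. Arguments TZ {XD XF E}. Arguments TW {XD XF E}.

Definition tpo_step (E : eqType) (XD XF : Type) (D : dfa E XD) (F : dfa E XF)
  (q : tstate XD XF E) (l : tlabel E) : option (tstate XD XF E) :=
  match q, l with
  | TY d f, LEv e =>
      if dstep F f e is Some _ then Some (TZ d f e) else None
  | TZ d f e, LEv th =>
      if dstep D d th is Some d' then Some (TZ d' f e) else None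
  | TZ d f e, LEps =>
      if (dstep D d e) && (dstep F f e) then Some (TW d f (AEv e)) else None
  | TZ d f e, LEr e' =>
      if (e' == e) && (dstep F f e) then Some (TW d f (AEr e)) else None
  | TW d f (AEv e), LEv e' =>
      if e' == e then
        match dstep D d e, dstep F f e with
        | Some d', Some f' => Some (TY d' f')
        | _, _ => None end
      else None
  | TW d f (AEr e), LEv e' =>
      if e' == e then
        (if dstep F f e is Some f' then Some (TY d f') else None)
      else None
  | _, _ => None
  end.

Definition tpo_rel (E : eqType) XD XF (D : dfa E XD) (F : dfa E XF)
  : tstate XD XF E -> tlabel E -> tstate XD XF E -> Prop :=
  fun q l q' => tpo_step D F q l = Some q'.

Definition tpo_init (E : eqType) XD XF (D : dfa E XD) (F : dfa E XF)
  : tstate XD XF E := TY (dinit D) (dinit F).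

Inductive lpath (S L : Type) (T : S -> L -> S -> Prop) : S -> seq L -> S -> Prop :=
  | lp_nil q : lpath T q [::] q
  | lp_cons q l q' s q'' : T q l q' -> lpath T q' s q'' -> lpath T q (l :: s) q''.

Definition tpo_reach (E : eqType) XD XF (D : dfa E XD) (F : dfa E XF)
  (q : tstate XD XF E) : Prop :=
  exists s, lpath (tpo_rel D F) (tpo_init D F) s q.

(* symbols: events e, formal theta_e, formal sigma_{a,w} *)
Inductive sym (E : Type) :=
  | SEv of E
  | STheta of tlabel E & E
  | SW of E & act E.
Arguments SEv {E}. Arguments STheta {E}. Arguments SW {E}.

Notation gstate Q E := (tstate {set Q} {set Q} E).

(* T_i = TPO(det_d G, det G); Sj = alphabet of the other component *)
Inductive gT_trans (E Q : finType) (G : nfa E Q) (Sj : {set E})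
  : gstate Q E -> sym E -> gstate Q E -> Prop :=
  | gT_a d f e z : tpo_step (det_d G) (det G) (TY d f) (LEv e) = Some z ->
      gT_trans G Sj (TY d f) (SEv e) z
  | gT_b d f e th q : tpo_step (det_d G) (det G) (TZ d f e) th = Some q ->
      gT_trans G Sj (TZ d f e) (STheta th e) q
  | gT_c d f a e y : tpo_step (det_d G) (det G) (TW d f a) (LEv e) = Some y ->
      gT_trans G Sj (TW d f a) (SW e a) y
  | gT_d d f al : al \in Sj -> al \notin alph G ->
      gT_trans G Sj (TY d f) (SEv al) (TY d f).

Definition gT_init (E Q : finType) (G : nfa E Q) : gstate Q E :=
  tpo_init (det_d G) (det G).

Definition gT_E (E Q : finType) (G : nfa E Q) (e : E) : Prop :=
  exists d f, tpo_reach (det_d G) (det G) (TZ d f e).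
Definition gT_A (E Q : finType) (G : nfa E Q) (a : act E) : Prop :=
  exists d f, tpo_reach (det_d G) (det G) (TW d f a).

Definition gT_alph (E Q : finType) (G : nfa E Q) (Sj : {set E}) (x : sym E) : Prop :=
  let Si := alph G in
  match x with
  | SEv e => e \in Si \/ (e \in Sj :\: Si)
  | STheta th e =>
      ((match th with LEv t => t \in Si | LEps => True | LEr t => t \in Si end)
        /\ gT_E G e)
      \/ (exists b, th = LEv b /\ b \in Si :&: Sj /\ e \in Sj :\: Si)
  | SW s a =>
      (s \in Si /\ gT_A G a)
      \/ (s \in Si :&: Sj /\
          exists al, (a = AEv al \/ a = AEr al) /\ al \in Sj :\: Si)
  end.

Inductive psync (S1 S2 L : Type) (A1 : L -> Prop) (T1 : S1 -> L -> S1 -> Prop)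
  (A2 : L -> Prop) (T2 : S2 -> L -> S2 -> Prop) : S1 * S2 -> L -> S1 * S2 -> Prop :=
  | ps_both p1 p2 q1 q2 l : A1 l -> A2 l -> T1 p1 l q1 -> T2 p2 l q2 ->
      psync A1 T1 A2 T2 (p1, p2) l (q1, q2)
  | ps_left p1 p2 q1 l : A1 l -> ~ A2 l -> T1 p1 l q1 ->
      psync A1 T1 A2 T2 (p1, p2) l (q1, p2)
  | ps_right p1 p2 q2 l : ~ A1 l -> A2 l -> T2 p2 l q2 ->
      psync A1 T1 A2 T2 (p1, p2) l (p1, q2).

Definition rho (E : Type) (x : sym E) : tlabel E :=
  match x with
  | SEv e => LEv e
  | STheta th _ => th
  | SW s _ => LEv s
  end.

(* Main.v *)
Require Import Defs.
From HB Require Import structures.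
From mathcomp Require Import all_boot.
From Stdlib Require List.
Set Implicit Arguments. Unset Strict Implicit. Unset Printing Implicit Defensive.

Lemma connect_map (T T' : finType) (e : rel T) (e' : rel T') (h : T -> T') :
  (forall u v, e u v -> e' (h u) (h v)) ->
  forall x y, connect e x y -> connect e' (h x) (h y).
Proof.
move=> He x y /connectP[p Hp ->].
elim: p x Hp => [|z p IH] x /=; first by rewrite connect0.
case/andP=> Hxz Hp; exact: connect_trans (connect1 (He _ _ Hxz)) (IH _ Hp).
Qed.

Lemma connect_prod (E Q1 Q2 : finType) (G1 : nfa E Q1) (G2 : nfa E Q2) a b x y :
  connect (tau_rel (nsync G1 G2)) (a, b) (x, y) =
  connect (tau_rel G1) a x && connect (tau_rel G2) b y.
Proof.
apply/idP/idP.
- case/connectP=> p Hp Hl.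
  elim: p a b Hp Hl => [|[z1 z2] p IH] a b /=.
  + by move=> _ [-> ->]; rewrite !connect0.
  + case/andP=> He Hp Hl; case/andP: (IH _ _ Hp Hl) => H1 H2.
    rewrite /tau_rel /= in He.
    case/orP: He => /andP[Ht /eqP Heq]; subst.
    * by rewrite H2 andbT; apply: connect_trans (connect1 Ht) H1.
    * by rewrite H1 /=; apply: connect_trans (connect1 Ht) H2.
- case/andP=> H1 H2.
  apply: (@connect_trans _ _ (x, b)).
  + apply: (connect_map (h := fun u => (u, b))) H1 => u v Huv.
    by rewrite /tau_rel /= in Huv *; rewrite Huv eqxx.
  + apply: (connect_map (h := fun u => (x, u))) H2 => u v Huv.
    by rewrite /tau_rel /= in Huv *; rewrite Huv eqxx orbT.
Qed.

Lemma UR_setX (E Q1 Q2 : finType) (G1 : nfa E Q1) (G2 : nfa E Q2) A B :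
  UR (nsync G1 G2) (setX A B) = setX (UR G1 A) (UR G2 B).
Proof.
apply/setP=> [[x y]]; rewrite !inE /=.
apply/existsP/andP.
- case=> [[a b]] /andP[]; rewrite inE => /andP[Ha Hb].
  rewrite connect_prod => /andP[H1 H2].
  by split; apply/existsP; [exists a | exists b]; rewrite ?Ha ?Hb.
- case=> /existsP[a /andP[Ha H1]] /existsP[b /andP[Hb H2]].
  by exists (a, b); rewrite inE Ha Hb connect_prod H1 H2.
Qed.

Lemma UR_idem (E Q : finType) (G : nfa E Q) B : UR G (UR G B) = UR G B.
Proof.
apply/setP=> x; rewrite !inE; apply/existsP/existsP.
- case=> y /andP[]; rewrite inE => /existsP[b /andP[Hb Hby]] Hyx.
  by exists b; rewrite Hb (connect_trans Hby Hyx).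
- case=> b /andP[Hb Hbx]; exists x; rewrite connect0 andbT inE.
  by apply/existsP; exists b; rewrite Hb.
Qed.

Lemma post_both (E Q1 Q2 : finType) (G1 : nfa E Q1) (G2 : nfa E Q2) A B e :
  e \in alph G1 -> e \in alph G2 ->
  post (nsync G1 G2) (setX A B) e = setX (post G1 A e) (post G2 B e).
Proof.
move=> H1 H2; apply/setP=> [[x y]]; rewrite !inE /= H1 H2 /=.
apply/existsP/andP.
- case=> [[a b]] /andP[]; rewrite inE => /andP[Ha Hb] /andP[T1 T2].
  by split; apply/existsP; [exists a | exists b]; rewrite ?Ha ?Hb.
- case=> /existsP[a /andP[Ha T1]] /existsP[b /andP[Hb T2]].
  by exists (a, b); rewrite inE Ha Hb /= T1 T2.
Qed.

Lemma post_l (E Q1 Q2 : finType) (G1 : nfa E Q1) (G2 : nfa E Q2) A B e :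
  e \in alph G1 -> e \notin alph G2 ->
  post (nsync G1 G2) (setX A B) e = setX (post G1 A e) B.
Proof.
move=> H1 /negbTE H2; apply/setP=> [[x y]]; rewrite !inE /= H1 H2 /=.
apply/existsP/andP.
- case=> [[a b]] /andP[]; rewrite inE => /andP[Ha Hb] /andP[T1 /eqP T2]; subst.
  by split=> //; apply/existsP; exists a; rewrite Ha.
- case=> /existsP[a /andP[Ha T1]] Hb.
  by exists (a, y); rewrite inE Ha Hb /= T1 eqxx.
Qed.

Lemma post_r (E Q1 Q2 : finType) (G1 : nfa E Q1) (G2 : nfa E Q2) A B e :
  e \notin alph G1 -> e \in alph G2 ->
  post (nsync G1 G2) (setX A B) e = setX A (post G2 B e).
Proof.
move=> /negbTE H1 H2; apply/setP=> [[x y]]; rewrite !inE /= H1 H2 /=.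
apply/existsP/andP.
- case=> [[a b]] /andP[]; rewrite inE => /andP[Ha Hb] /andP[T1 /eqP T2]; subst.
  by split=> //; apply/existsP; exists b; rewrite Hb.
- case=> Ha /existsP[b /andP[Hb T1]].
  by exists (x, b); rewrite inE Ha Hb /= T1 eqxx.
Qed.

Lemma setX_neq0 (T1 T2 : finType) (A : {set T1}) (B : {set T2}) :
  (setX A B != set0) = (A != set0) && (B != set0).
Proof. by rewrite -!card_gt0 cardsX muln_gt0. Qed.

Lemma det_stepP (E Q : finType) (G : nfa E Q) X e Y :
  det_step G X e = Some Y <-> [/\ e \in alph G, Y = UR G (post G X e) & Y != set0].
Proof.
rewrite /det_step; split.
- by case: ifP => // /andP[H1 H2] [<-].
- by case=> H1 -> H2; rewrite H1 H2.
Qed.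

Lemma dstep_det (E Q : finType) (G : nfa E Q) X e : dstep (det G) X e = det_step G X e.
Proof. by []. Qed.

Lemma det_dP (E Q : finType) (G : nfa E Q) X e Y :
  dstep (det_d G) X e = Some Y <-> det_step G X e = Some Y /\ ~~ (Y \subset nsecret G).
Proof.
rewrite /=; case: (det_step G X e) => [Z|]; last by split=> // [[]].
case: ifP => HZ; split => //.
- by case=> [[<-]]; rewrite HZ.
- by case=> <-; rewrite HZ.
- by case.
Qed.

Lemma det_step_alph (E Q : finType) (G : nfa E Q) X e Y :
  det_step G X e = Some Y -> e \in alph G.
Proof. by case/det_stepP. Qed.

Lemma PF_both (E Q1 Q2 : finType) (G1 : nfa E Q1) (G2 : nfa E Q2) (A : {set Q1}) (B : {set Q2}) e A' B' :
  det_step G1 A e = Some A' -> det_step G2 B e = Some B' ->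
  det_step (nsync G1 G2) (setX A B) e = Some (setX A' B').
Proof.
case/det_stepP=> H1 -> N1; case/det_stepP=> H2 -> N2.
apply/det_stepP; rewrite post_both // UR_setX setX_neq0 N1 N2; split=> //.
by rewrite /= inE H1.
Qed.

Lemma PF_l (E Q1 Q2 : finType) (G1 : nfa E Q1) (G2 : nfa E Q2) (A : {set Q1}) (B : {set Q2}) e A' :
  det_step G1 A e = Some A' -> e \notin alph G2 -> UR G2 B = B -> B != set0 ->
  det_step (nsync G1 G2) (setX A B) e = Some (setX A' B).
Proof.
case/det_stepP=> H1 -> N1 H2 UB NB.
apply/det_stepP; rewrite post_l // UR_setX UB setX_neq0 N1 NB; split=> //.
by rewrite /= inE H1.
Qed.

Lemma PF_r (E Q1 Q2 : finType) (G1 : nfa E Q1) (G2 : nfa E Q2) (A : {set Q1}) (B : {set Q2}) e B' :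
  det_step G2 B e = Some B' -> e \notin alph G1 -> UR G1 A = A -> A != set0 ->
  det_step (nsync G1 G2) (setX A B) e = Some (setX A B').
Proof.
case/det_stepP=> H2 -> N2 H1 UA NA.
apply/det_stepP; rewrite post_r // UR_setX UA setX_neq0 N2 NA; split=> //.
by rewrite /= inE H2 orbT.
Qed.

Lemma secX (E Q1 Q2 : finType) (G1 : nfa E Q1) (G2 : nfa E Q2) (A : {set Q1}) (B : {set Q2}) :
  ~~ (A \subset nsecret G1) -> ~~ (B \subset nsecret G2) ->
  ~~ (setX A B \subset nsecret (nsync G1 G2)).
Proof.
case/subsetPn=> a Ha Na; case/subsetPn=> b Hb Nb.
apply/subsetPn; exists (a, b); first by rewrite inE Ha Hb.
by rewrite /= inE /= (negbTE Na) (negbTE Nb).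
Qed.

Lemma nsub_neq0 (T : finType) (A B : {set T}) : ~~ (A \subset B) -> A != set0.
Proof. by apply: contra => /eqP ->; rewrite sub0set. Qed.

Lemma PD_both (E Q1 Q2 : finType) (G1 : nfa E Q1) (G2 : nfa E Q2) (A : {set Q1}) (B : {set Q2}) e A' B' :
  dstep (det_d G1) A e = Some A' -> dstep (det_d G2) B e = Some B' ->
  dstep (det_d (nsync G1 G2)) (setX A B) e = Some (setX A' B').
Proof.
case/det_dP=> H1 S1; case/det_dP=> H2 S2; apply/det_dP.
by rewrite (PF_both H1 H2) secX.
Qed.

Lemma PD_l (E Q1 Q2 : finType) (G1 : nfa E Q1) (G2 : nfa E Q2) (A : {set Q1}) (B : {set Q2}) e A' :
  dstep (det_d G1) A e = Some A' -> e \notin alph G2 -> UR G2 B = B ->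
  ~~ (B \subset nsecret G2) ->
  dstep (det_d (nsync G1 G2)) (setX A B) e = Some (setX A' B).
Proof.
case/det_dP=> H1 S1 H2 UB SB; apply/det_dP.
by rewrite (PF_l H1 H2 UB (nsub_neq0 SB)) secX.
Qed.

Lemma PD_r (E Q1 Q2 : finType) (G1 : nfa E Q1) (G2 : nfa E Q2) (A : {set Q1}) (B : {set Q2}) e B' :
  dstep (det_d G2) B e = Some B' -> e \notin alph G1 -> UR G1 A = A ->
  ~~ (A \subset nsecret G1) ->
  dstep (det_d (nsync G1 G2)) (setX A B) e = Some (setX A B').
Proof.
case/det_dP=> H2 S2 H1 UA SA; apply/det_dP.
by rewrite (PF_r H2 H1 UA (nsub_neq0 SA)) secX.
Qed.

Definition comps (XD XF E : Type) (q : tstate XD XF E) : XD * XF :=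
  match q with TY d f => (d, f) | TZ d f _ => (d, f) | TW d f _ => (d, f) end.
Definition act_e (E : Type) (a : act E) : E := match a with AEv e => e | AEr e => e end.

Lemma stepY (E : eqType) XD XF (D : dfa E XD) (F : dfa E XF) d f l q :
  tpo_step D F (TY d f) l = Some q ->
  exists e f', [/\ l = LEv e, dstep F f e = Some f' & q = TZ d f e].
Proof.
case: l => [e| |e] //=; case H: (dstep F f e) => [f'|] // [<-].
by exists e, f'.
Qed.

Lemma stepZ (E : eqType) XD XF (D : dfa E XD) (F : dfa E XF) d f e l q :
  tpo_step D F (TZ d f e) l = Some q ->
  (exists t d', [/\ l = LEv t, dstep D d t = Some d' & q = TZ d' f e]) \/
  (exists d' f', [/\ l = LEps, dstep D d e = Some d', dstep F f e = Some f' & q = TW d f (AEv e)]) \/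
  (exists f', [/\ l = LEr e, dstep F f e = Some f' & q = TW d f (AEr e)]).
Proof.
case: l => [t| |t] /=.
- case H: (dstep D d t) => [d'|] // [<-]; left; by exists t, d'.
- case H: (dstep D d e) => [d'|] //; case H': (dstep F f e) => [f'|] // [<-].
  right; left; by exists d', f'.
- case: eqP => // ->; case H': (dstep F f e) => [f'|] // [<-].
  right; right; by exists f'.
Qed.

Lemma stepW (E : eqType) XD XF (D : dfa E XD) (F : dfa E XF) d f a l q :
  tpo_step D F (TW d f a) l = Some q ->
  l = LEv (act_e a) /\
  ((exists e d' f', [/\ a = AEv e, dstep D d e = Some d', dstep F f e = Some f' & q = TY d' f']) \/
   (exists e f', [/\ a = AEr e, dstep F f e = Some f' & q = TY d f'])).
Proof.
case: a => e; case: l => [t| |t] //=; case: eqP => // ->.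
- case H: (dstep D d e) => [d'|] //; case H': (dstep F f e) => [f'|] // [<-].
  split=> //; left; by exists e, d', f'.
- case H': (dstep F f e) => [f'|] // [<-].
  split=> //; right; by exists e, f'.
Qed.

Definition good (E Q : finType) (G : nfa E Q) (d f : {set Q}) :=
  [/\ UR G d = d, ~~ (d \subset nsecret G), UR G f = f & f != set0].

Definition inv (E Q : finType) (G : nfa E Q) (q : gstate Q E) :=
  good G (comps q).1 (comps q).2 /\
  match q with TY _ _ => True | TZ _ _ e => e \in alph G | TW _ _ a => act_e a \in alph G end.

Lemma good_det (E Q : finType) (G : nfa E Q) X e Y :
  det_step G X e = Some Y -> UR G Y = Y /\ Y != set0.
Proof. by case/det_stepP=> _ -> N; rewrite UR_idem. Qed.

Lemma inv_step (E Q : finType) (G : nfa E Q) q l q' :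
  inv G q -> tpo_step (det_d G) (det G) q l = Some q' -> inv G q'.
Proof.
case: q => [d f|d f e|d f a] [[U1 S1 U2 N2] Hq]; rewrite /= in U1 S1 U2 N2 Hq.
- move=> Hs; case: (stepY Hs) => e [f' [_ H ->]]; split=> //=; exact: det_step_alph H.
- move=> Hs; case: (stepZ Hs) => [[t [d' [_ H ->]]]|[[d' [f' [_ H H' ->]]]|[f' [_ H ->]]]] //.
  case/det_dP: H => H S; case: (good_det H) => U N.
  by split=> //; split.
- move=> Hs; case: (stepW Hs) => _ [[e [d' [f' [_ H H' ->]]]]|[e [f' [_ H ->]]]].
  + case/det_dP: H => H S; case: (good_det H) => U N.
    case: (good_det H') => U' N'; by split=> //; split.
  + case: (good_det H) => U' N'; by split=> //; split.
Qed.

Lemma inv_init (E Q : finType) (G : nfa E Q) :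
  ~~ (UR G (ninit G) \subset nsecret G) -> inv G (tpo_init (det_d G) (det G)).
Proof.
move=> H; split=> //=; split=> //; rewrite ?UR_idem //; exact: nsub_neq0 H.
Qed.

Lemma lpath_inv (S L : Type) (T : S -> L -> S -> Prop) (P : S -> Prop) p s q :
  lpath T p s q -> (forall x l y, P x -> T x l y -> P y) -> P p -> P q.
Proof. by elim=> // x l y s' z Hxy _ IH HP Px; apply: IH => //; apply: HP Px Hxy. Qed.

Lemma reach_inv (E Q : finType) (G : nfa E Q) q :
  ~~ (UR G (ninit G) \subset nsecret G) ->
  tpo_reach (det_d G) (det G) q -> inv G q.
Proof.
move=> H [s Hs]; apply: (lpath_inv Hs); last exact: inv_init.
by move=> x l y; apply: inv_step.
Qed.

Lemma lpath_snoc (S L : Type) (T : S -> L -> S -> Prop) p s q l q' :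
  lpath T p s q -> T q l q' -> lpath T p (rcons s l) q'.
Proof.
elim=> [x|x l0 y s' z Hxy _ IH] Hl /=.
- by apply: lp_cons Hl (lp_nil _ _).
- by apply: lp_cons Hxy (IH Hl).
Qed.

Lemma reach_step (E Q : finType) (G : nfa E Q) Sj q x q' :
  tpo_reach (det_d G) (det G) q -> gT_trans G Sj q x q' ->
  tpo_reach (det_d G) (det G) q'.
Proof.
case=> s Hs Ht; case: Ht Hs.
all: first [by move=> d f e z H Hs; exists (rcons s (LEv e)); apply: lpath_snoc Hs H
           | by move=> d f e th z H Hs; exists (rcons s th); apply: lpath_snoc Hs H
           | by move=> d f a e z H Hs; exists (rcons s (LEv e)); apply: lpath_snoc Hs H
           | by move=> d f al _ _ Hs; exists s].
Qed.

Lemma gTY (E Q : finType) (G : nfa E Q) Sj d f x q :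
  gT_trans G Sj (TY d f) x q ->
  (exists e f', [/\ x = SEv e, det_step G f e = Some f' & q = TZ d f e]) \/
  (exists al, [/\ x = SEv al, al \in Sj, al \notin alph G & q = TY d f]).
Proof.
move=> H; inversion H; subst.
- left; case: (stepY H4) => e' [f' [[<-] Hf ->]]; by exists e, f'.
- right; by exists al.
Qed.

Lemma gTZ (E Q : finType) (G : nfa E Q) Sj d f e x q :
  gT_trans G Sj (TZ d f e) x q ->
  exists th, x = STheta th e /\ tpo_step (det_d G) (det G) (TZ d f e) th = Some q.
Proof. move=> H; inversion H; subst; by exists th. Qed.

Lemma gTW (E Q : finType) (G : nfa E Q) Sj d f a x q :
  gT_trans G Sj (TW d f a) x q ->
  exists e, x = SW e a /\ tpo_step (det_d G) (det G) (TW d f a) (LEv e) = Some q.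
Proof. move=> H; inversion H; subst; by exists e. Qed.

Lemma gTY_alph (E Q Q' : finType) (G : nfa E Q) (G' : nfa E Q') d f x q :
  gT_trans G (alph G') (TY d f) x q -> gT_alph G' (alph G) x.
Proof.
case/gTY=> [[e [f' [-> H _]]]|[al [-> Hal _ _]]] /=.
- have He := det_step_alph H.
  case Hx: (e \in alph G'); [by left | right; by rewrite inE Hx He].
- by left.
Qed.

Lemma fY (E : eqType) XD XF (D : dfa E XD) (F : dfa E XF) d f e f' :
  dstep F f e = Some f' -> tpo_step D F (TY d f) (LEv e) = Some (TZ d f e).
Proof. by move=> /= ->. Qed.
Lemma fZev (E : eqType) XD XF (D : dfa E XD) (F : dfa E XF) d f e t d' :
  dstep D d t = Some d' -> tpo_step D F (TZ d f e) (LEv t) = Some (TZ d' f e).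
Proof. by move=> /= ->. Qed.
Lemma fZeps (E : eqType) XD XF (D : dfa E XD) (F : dfa E XF) d f e d' f' :
  dstep D d e = Some d' -> dstep F f e = Some f' ->
  tpo_step D F (TZ d f e) LEps = Some (TW d f (AEv e)).
Proof. by move=> /= -> ->. Qed.
Lemma fZer (E : eqType) XD XF (D : dfa E XD) (F : dfa E XF) d f e f' :
  dstep F f e = Some f' -> tpo_step D F (TZ d f e) (LEr e) = Some (TW d f (AEr e)).
Proof. by move=> /= ->; rewrite eqxx. Qed.
Lemma fWev (E : eqType) XD XF (D : dfa E XD) (F : dfa E XF) d f e d' f' :
  dstep D d e = Some d' -> dstep F f e = Some f' ->
  tpo_step D F (TW d f (AEv e)) (LEv e) = Some (TY d' f').
Proof. by move=> /= -> ->; rewrite eqxx. Qed.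
Lemma fWer (E : eqType) XD XF (D : dfa E XD) (F : dfa E XF) d f e f' :
  dstep F f e = Some f' -> tpo_step D F (TW d f (AEr e)) (LEv e) = Some (TY d f').
Proof. by move=> /= ->; rewrite eqxx. Qed.

Inductive Rel (E Q1 Q2 : finType) (G1 : nfa E Q1) (G2 : nfa E Q2) :
  gstate Q1 E * gstate Q2 E -> gstate (Q1 * Q2) E -> Prop :=
 | R_Y d1 f1 d2 f2 : Rel G1 G2 (TY d1 f1, TY d2 f2) (TY (setX d1 d2) (setX f1 f2))
 | R_Zb d1 f1 d2 f2 e : Rel G1 G2 (TZ d1 f1 e, TZ d2 f2 e) (TZ (setX d1 d2) (setX f1 f2) e)
 | R_Zl d1 f1 d2 f2 e : e \notin alph G2 ->
     Rel G1 G2 (TZ d1 f1 e, TY d2 f2) (TZ (setX d1 d2) (setX f1 f2) e)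
 | R_Zr d1 f1 d2 f2 e : e \notin alph G1 ->
     Rel G1 G2 (TY d1 f1, TZ d2 f2 e) (TZ (setX d1 d2) (setX f1 f2) e)
 | R_Wb d1 f1 d2 f2 a : Rel G1 G2 (TW d1 f1 a, TW d2 f2 a) (TW (setX d1 d2) (setX f1 f2) a)
 | R_Wl d1 f1 d2 f2 a : act_e a \notin alph G2 ->
     Rel G1 G2 (TW d1 f1 a, TY d2 f2) (TW (setX d1 d2) (setX f1 f2) a)
 | R_Wr d1 f1 d2 f2 a : act_e a \notin alph G1 ->
     Rel G1 G2 (TY d1 f1, TW d2 f2 a) (TW (setX d1 d2) (setX f1 f2) a).

Definition PS (E Q1 Q2 : finType) (G1 : nfa E Q1) (G2 : nfa E Q2) :=
  psync (gT_alph G1 (alph G2)) (gT_trans G1 (alph G2))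
        (gT_alph G2 (alph G1)) (gT_trans G2 (alph G1)).

Definition TN (E Q1 Q2 : finType) (G1 : nfa E Q1) (G2 : nfa E Q2) :=
  tpo_step (det_d (nsync G1 G2)) (det (nsync G1 G2)).

Lemma psyncE (S1 S2 L : Type) (A1 : L -> Prop) (T1 : S1 -> L -> S1 -> Prop)
  (A2 : L -> Prop) (T2 : S2 -> L -> S2 -> Prop) p1 p2 x q :
  psync A1 T1 A2 T2 (p1, p2) x q ->
  (exists q1 q2, [/\ A1 x, A2 x, T1 p1 x q1, T2 p2 x q2 & q = (q1, q2)]) \/
  (exists q1, [/\ A1 x, ~ A2 x, T1 p1 x q1 & q = (q1, p2)]) \/
  (exists q2, [/\ ~ A1 x, A2 x, T2 p2 x q2 & q = (p1, q2)]).
Proof.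
move=> H; inversion H; subst.
- left; by exists q1, q2.
- right; left; by exists q1.
- right; right; by exists q2.
Qed.

Lemma sim_Y (E Q1 Q2 : finType) (G1 : nfa E Q1) (G2 : nfa E Q2) d1 f1 d2 f2 x p' :
  ~~ (UR G1 (ninit G1) \subset nsecret G1) ->
  ~~ (UR G2 (ninit G2) \subset nsecret G2) ->
  tpo_reach (det_d G1) (det G1) (TY d1 f1) ->
  tpo_reach (det_d G2) (det G2) (TY d2 f2) ->
  PS G1 G2 (TY d1 f1, TY d2 f2) x p' ->
  exists m', TN G1 G2 (TY (setX d1 d2) (setX f1 f2)) (rho x) = Some m' /\ Rel G1 G2 p' m'.
Proof.
move=> I1 I2 R1 R2 Hps.
have [[U1 S1 V1 N1] _] := reach_inv I1 R1.
have [[U2 S2 V2 N2] _] := reach_inv I2 R2.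
rewrite /= in U1 S1 V1 N1 U2 S2 V2 N2.
case: (psyncE Hps) => [[q1 [q2 [A1 A2 T1 T2 ->]]]|[[q1 [A1 A2 T1 ->]]|[q2 [A1 A2 T2 ->]]]].
- case: (gTY T1) => [[e [f1' [Hx H1 ->]]]|[al [Hx Hal Nal ->]]];
  case: (gTY T2) => [[e' [f2' [Hx' H2 ->]]]|[al' [Hx' Hal' Nal' ->]]];
  rewrite Hx in Hx' *; case: Hx' => ?; subst; rewrite /TN.
  + eexists; split; first by apply: fY; exact: PF_both H1 H2.
    exact: R_Zb.
  + eexists; split; first by apply: fY; exact: PF_l H1 Nal' V2 N2.
    exact: R_Zl.
  + eexists; split; first by apply: fY; exact: PF_r H2 Nal V1 N1.
    exact: R_Zr.
  + by rewrite Hal' in Nal.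
- by case: A2; apply: gTY_alph T1.
- by case: A1; apply: gTY_alph T2.
Qed.

Lemma sim_Zb (E Q1 Q2 : finType) (G1 : nfa E Q1) (G2 : nfa E Q2) d1 f1 d2 f2 e x p' :
  ~~ (UR G1 (ninit G1) \subset nsecret G1) ->
  ~~ (UR G2 (ninit G2) \subset nsecret G2) ->
  tpo_reach (det_d G1) (det G1) (TZ d1 f1 e) ->
  tpo_reach (det_d G2) (det G2) (TZ d2 f2 e) ->
  PS G1 G2 (TZ d1 f1 e, TZ d2 f2 e) x p' ->
  exists m', TN G1 G2 (TZ (setX d1 d2) (setX f1 f2) e) (rho x) = Some m' /\ Rel G1 G2 p' m'.
Proof.
move=> I1 I2 R1 R2 Hps.
have [[U1 S1 V1 N1] E1] := reach_inv I1 R1.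
have [[U2 S2 V2 N2] E2] := reach_inv I2 R2.
rewrite /= in U1 S1 V1 N1 U2 S2 V2 N2 E1 E2.
have gE1 : gT_E G1 e by exists d1, f1.
have gE2 : gT_E G2 e by exists d2, f2.
rewrite /TN.
case: (psyncE Hps) => [[q1 [q2 [A1 A2 T1 T2 ->]]]|[[q1 [A1 A2 T1 ->]]|[q2 [A1 A2 T2 ->]]]].
- case: (gTZ T1) => th [Hx H1]; case: (gTZ T2) => th' [Hx' H2].
  rewrite Hx in Hx'; case: Hx' => Eth; rewrite -Eth in H2; subst x.
  case: (stepZ H1) => [[t [d1' [Ht1 Hd1 ->]]] | [[d1' [f1' [Ht1 Hd1 Hf1 ->]]] | [f1' [Ht1 Hf1 ->]]]];
  case: (stepZ H2) => [[t' [d2' [Ht Hd2 ->]]] | [[d2' [f2' [Ht Hd2 Hf2 ->]]] | [f2' [Ht Hf2 ->]]]];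
  rewrite Ht1 in Ht *; try discriminate Ht.
  + case: Ht => ?; subst.
    eexists; split; first by apply: fZev; exact: PD_both Hd1 Hd2.
    exact: R_Zb.
  + eexists; split; first by apply: fZeps; [exact: PD_both Hd1 Hd2 | exact: PF_both Hf1 Hf2].
    exact: R_Wb.
  + eexists; split; first by apply: fZer; exact: PF_both Hf1 Hf2.
    exact: R_Wb.
- case: (gTZ T1) => th [Hx H1]; subst x.
  case: (stepZ H1) => [[t [d1' [Ht Hd1 ->]]] | [[d1' [f1' [Ht Hd1 Hf1 ->]]] | [f1' [Ht Hf1 ->]]]];
  subst th.
  + have Nt : t \notin alph G2.
      by apply/negP => Ht2; apply: A2 => /=; left.
    eexists; split; first by apply: fZev; apply: PD_l Hd1 Nt U2 S2.
    exact: R_Zb.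
  + by case: A2 => /=; left.
  + by case: A2 => /=; left.
- case: (gTZ T2) => th [Hx H2]; subst x.
  case: (stepZ H2) => [[t [d2' [Ht Hd2 ->]]] | [[d2' [f2' [Ht Hd2 Hf2 ->]]] | [f2' [Ht Hf2 ->]]]];
  subst th.
  + have Nt : t \notin alph G1.
      by apply/negP => Ht1; apply: A1 => /=; left.
    eexists; split; first by apply: fZev; apply: PD_r Hd2 Nt U1 S1.
    exact: R_Zb.
  + by case: A1 => /=; left.
  + by case: A1 => /=; left.
Qed.

Lemma sim_Zl (E Q1 Q2 : finType) (G1 : nfa E Q1) (G2 : nfa E Q2) d1 f1 d2 f2 e x p' :
  ~~ (UR G1 (ninit G1) \subset nsecret G1) ->
  ~~ (UR G2 (ninit G2) \subset nsecret G2) ->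
  tpo_reach (det_d G1) (det G1) (TZ d1 f1 e) ->
  tpo_reach (det_d G2) (det G2) (TY d2 f2) ->
  e \notin alph G2 ->
  PS G1 G2 (TZ d1 f1 e, TY d2 f2) x p' ->
  exists m', TN G1 G2 (TZ (setX d1 d2) (setX f1 f2) e) (rho x) = Some m' /\ Rel G1 G2 p' m'.
Proof.
move=> I1 I2 R1 R2 He Hps.
have [[U1 S1 V1 N1] E1] := reach_inv I1 R1.
have [[U2 S2 V2 N2] E2] := reach_inv I2 R2.
rewrite /= in U1 S1 V1 N1 U2 S2 V2 N2 E1 E2.
rewrite /TN.
case: (psyncE Hps) => [[q1 [q2 [A1 A2 T1 T2 ->]]]|[[q1 [A1 A2 T1 ->]]|[q2 [A1 A2 T2 ->]]]].
- case: (gTZ T1) => th [Hx _].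
  case: (gTY T2) => [[e' [? [Hx' _ _]]]|[al [Hx' _ _ _]]]; by rewrite Hx in Hx'.
- case: (gTZ T1) => th [Hx H1]; subst x.
  case: (stepZ H1) => [[t [d1' [Ht Hd1 ->]]] | [[d1' [f1' [Ht Hd1 Hf1 ->]]] | [f1' [Ht Hf1 ->]]]];
  subst th.
  + have Ht1 : t \in alph G1.
      by case/det_dP: Hd1 => /det_step_alph.
    have Nt : t \notin alph G2.
      apply/negP => Ht2; apply: A2 => /=; right; exists t; split=> //; split.
      * by rewrite !inE Ht2 Ht1.
      * by rewrite !inE He E1.
    eexists; split; first by apply: fZev; apply: PD_l Hd1 Nt U2 S2.
    exact: R_Zl.
  + eexists; split; first by apply: fZeps; [exact: PD_l Hd1 He U2 S2 | exact: PF_l Hf1 He V2 N2].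
    exact: R_Wl.
  + eexists; split; first by apply: fZer; exact: PF_l Hf1 He V2 N2.
    exact: R_Wl.
- by case: A1; apply: gTY_alph T2.
Qed.

Lemma sim_Zr (E Q1 Q2 : finType) (G1 : nfa E Q1) (G2 : nfa E Q2) d1 f1 d2 f2 e x p' :
  ~~ (UR G1 (ninit G1) \subset nsecret G1) ->
  ~~ (UR G2 (ninit G2) \subset nsecret G2) ->
  tpo_reach (det_d G1) (det G1) (TY d1 f1) ->
  tpo_reach (det_d G2) (det G2) (TZ d2 f2 e) ->
  e \notin alph G1 ->
  PS G1 G2 (TY d1 f1, TZ d2 f2 e) x p' ->
  exists m', TN G1 G2 (TZ (setX d1 d2) (setX f1 f2) e) (rho x) = Some m' /\ Rel G1 G2 p' m'.
Proof.
move=> I1 I2 R1 R2 He Hps.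
have [[U1 S1 V1 N1] E1] := reach_inv I1 R1.
have [[U2 S2 V2 N2] E2] := reach_inv I2 R2.
rewrite /= in U1 S1 V1 N1 U2 S2 V2 N2 E1 E2.
rewrite /TN.
case: (psyncE Hps) => [[q1 [q2 [A1 A2 T1 T2 ->]]]|[[q1 [A1 A2 T1 ->]]|[q2 [A1 A2 T2 ->]]]].
- case: (gTZ T2) => th [Hx _].
  case: (gTY T1) => [[e' [? [Hx' _ _]]]|[al [Hx' _ _ _]]]; by rewrite Hx in Hx'.
- by case: A2; apply: gTY_alph T1.
- case: (gTZ T2) => th [Hx H2]; subst x.
  case: (stepZ H2) => [[t [d2' [Ht Hd2 ->]]] | [[d2' [f2' [Ht Hd2 Hf2 ->]]] | [f2' [Ht Hf2 ->]]]];
  subst th.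
  + have Ht2 : t \in alph G2.
      by case/det_dP: Hd2 => /det_step_alph.
    have Nt : t \notin alph G1.
      apply/negP => Ht1; apply: A1 => /=; right; exists t; split=> //; split.
      * by rewrite !inE Ht2 Ht1.
      * by rewrite !inE He E2.
    eexists; split; first by apply: fZev; apply: PD_r Hd2 Nt U1 S1.
    exact: R_Zr.
  + eexists; split; first by apply: fZeps; [exact: PD_r Hd2 He U1 S1 | exact: PF_r Hf2 He V1 N1].
    exact: R_Wr.
  + eexists; split; first by apply: fZer; exact: PF_r Hf2 He V1 N1.
    exact: R_Wr.
Qed.

Lemma sim_Wb (E Q1 Q2 : finType) (G1 : nfa E Q1) (G2 : nfa E Q2) d1 f1 d2 f2 a x p' :
  ~~ (UR G1 (ninit G1) \subset nsecret G1) ->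
  ~~ (UR G2 (ninit G2) \subset nsecret G2) ->
  tpo_reach (det_d G1) (det G1) (TW d1 f1 a) ->
  tpo_reach (det_d G2) (det G2) (TW d2 f2 a) ->
  PS G1 G2 (TW d1 f1 a, TW d2 f2 a) x p' ->
  exists m', TN G1 G2 (TW (setX d1 d2) (setX f1 f2) a) (rho x) = Some m' /\ Rel G1 G2 p' m'.
Proof.
move=> I1 I2 R1 R2 Hps.
have [[U1 S1 V1 N1] E1] := reach_inv I1 R1.
have [[U2 S2 V2 N2] E2] := reach_inv I2 R2.
rewrite /= in U1 S1 V1 N1 U2 S2 V2 N2 E1 E2.
have gA1 : gT_A G1 a by exists d1, f1.
have gA2 : gT_A G2 a by exists d2, f2.
rewrite /TN.
case: (psyncE Hps) => [[q1 [q2 [A1 A2 T1 T2 ->]]]|[[q1 [A1 A2 T1 ->]]|[q2 [A1 A2 T2 ->]]]].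
- case: (gTW T1) => e1 [Hx H1]; case: (gTW T2) => e2 [Hx' H2].
  rewrite Hx in Hx'; case: Hx' => Ee; rewrite -Ee in H2; subst x.
  case: (stepW H1) => [Hl1 [[e [d1' [f1' [Ha Hd1 Hf1 ->]]]] | [e [f1' [Ha Hf1 ->]]]]];
  case: (stepW H2) => [Hl2 [[e' [d2' [f2' [Ha' Hd2 Hf2 ->]]]] | [e' [f2' [Ha' Hf2 ->]]]]];
  rewrite Ha in Ha' Hl1 *; try discriminate Ha'; case: Ha' => Ee'; subst e';
  have -> : e1 = e by case: Hl1.
  + eexists; split; first by apply: fWev; [exact: PD_both Hd1 Hd2 | exact: PF_both Hf1 Hf2].
    exact: R_Y.
  + eexists; split; first by apply: fWer; exact: PF_both Hf1 Hf2.
    exact: R_Y.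
- case: (gTW T1) => e1 [Hx H1]; subst x.
  case: (stepW H1) => Hl1 _; case: Hl1 => Ee; subst e1.
  by case: A2 => /=; left.
- case: (gTW T2) => e1 [Hx H2]; subst x.
  case: (stepW H2) => Hl1 _; case: Hl1 => Ee; subst e1.
  by case: A1 => /=; left.
Qed.

Lemma sim_Wl (E Q1 Q2 : finType) (G1 : nfa E Q1) (G2 : nfa E Q2) d1 f1 d2 f2 a x p' :
  ~~ (UR G1 (ninit G1) \subset nsecret G1) ->
  ~~ (UR G2 (ninit G2) \subset nsecret G2) ->
  tpo_reach (det_d G1) (det G1) (TW d1 f1 a) ->
  tpo_reach (det_d G2) (det G2) (TY d2 f2) ->
  act_e a \notin alph G2 ->
  PS G1 G2 (TW d1 f1 a, TY d2 f2) x p' ->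
  exists m', TN G1 G2 (TW (setX d1 d2) (setX f1 f2) a) (rho x) = Some m' /\ Rel G1 G2 p' m'.
Proof.
move=> I1 I2 R1 R2 He Hps.
have [[U1 S1 V1 N1] E1] := reach_inv I1 R1.
have [[U2 S2 V2 N2] E2] := reach_inv I2 R2.
rewrite /= in U1 S1 V1 N1 U2 S2 V2 N2 E1 E2.
rewrite /TN.
case: (psyncE Hps) => [[q1 [q2 [A1 A2 T1 T2 ->]]]|[[q1 [A1 A2 T1 ->]]|[q2 [A1 A2 T2 ->]]]].
- case: (gTW T1) => th [Hx _].
  case: (gTY T2) => [[e' [? [Hx' _ _]]]|[al [Hx' _ _ _]]]; by rewrite Hx in Hx'.
- case: (gTW T1) => e1 [Hx H1]; subst x.
  case: (stepW H1) => [Hl1 [[e [d1' [f1' [Ha Hd1 Hf1 ->]]]] | [e [f1' [Ha Hf1 ->]]]]];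
  subst a; (have Ee : e1 = e by case: Hl1); subst e1; rewrite /= in He.
  + eexists; split; first by apply: fWev; [exact: PD_l Hd1 He U2 S2 | exact: PF_l Hf1 He V2 N2].
    exact: R_Y.
  + eexists; split; first by apply: fWer; exact: PF_l Hf1 He V2 N2.
    exact: R_Y.
- by case: A1; apply: gTY_alph T2.
Qed.

Lemma sim_Wr (E Q1 Q2 : finType) (G1 : nfa E Q1) (G2 : nfa E Q2) d1 f1 d2 f2 a x p' :
  ~~ (UR G1 (ninit G1) \subset nsecret G1) ->
  ~~ (UR G2 (ninit G2) \subset nsecret G2) ->
  tpo_reach (det_d G1) (det G1) (TY d1 f1) ->
  tpo_reach (det_d G2) (det G2) (TW d2 f2 a) ->
  act_e a \notin alph G1 ->
  PS G1 G2 (TY d1 f1, TW d2 f2 a) x p' ->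
  exists m', TN G1 G2 (TW (setX d1 d2) (setX f1 f2) a) (rho x) = Some m' /\ Rel G1 G2 p' m'.
Proof.
move=> I1 I2 R1 R2 He Hps.
have [[U1 S1 V1 N1] E1] := reach_inv I1 R1.
have [[U2 S2 V2 N2] E2] := reach_inv I2 R2.
rewrite /= in U1 S1 V1 N1 U2 S2 V2 N2 E1 E2.
rewrite /TN.
case: (psyncE Hps) => [[q1 [q2 [A1 A2 T1 T2 ->]]]|[[q1 [A1 A2 T1 ->]]|[q2 [A1 A2 T2 ->]]]].
- case: (gTW T2) => th [Hx _].
  case: (gTY T1) => [[e' [? [Hx' _ _]]]|[al [Hx' _ _ _]]]; by rewrite Hx in Hx'.
- by case: A2; apply: gTY_alph T1.
- case: (gTW T2) => e1 [Hx H2]; subst x.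
  case: (stepW H2) => [Hl1 [[e [d2' [f2' [Ha Hd2 Hf2 ->]]]] | [e [f2' [Ha Hf2 ->]]]]];
  subst a; (have Ee : e1 = e by case: Hl1); subst e1; rewrite /= in He.
  + eexists; split; first by apply: fWev; [exact: PD_r Hd2 He U1 S1 | exact: PF_r Hf2 He V1 N1].
    exact: R_Y.
  + eexists; split; first by apply: fWer; exact: PF_r Hf2 He V1 N1.
    exact: R_Y.
Qed.

Lemma sim_step (E Q1 Q2 : finType) (G1 : nfa E Q1) (G2 : nfa E Q2) p m x p' :
  ~~ (UR G1 (ninit G1) \subset nsecret G1) ->
  ~~ (UR G2 (ninit G2) \subset nsecret G2) ->
  Rel G1 G2 p m ->
  tpo_reach (det_d G1) (det G1) p.1 ->
  tpo_reach (det_d G2) (det G2) p.2 ->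
  PS G1 G2 p x p' ->
  exists m', TN G1 G2 m (rho x) = Some m' /\ Rel G1 G2 p' m'.
Proof.
move=> I1 I2 HR; case: HR => /=.
- by move=> *; apply: sim_Y.
- by move=> *; apply: sim_Zb.
- by move=> d1 f1 d2 f2 e He R1 R2; apply: sim_Zl.
- by move=> d1 f1 d2 f2 e He R1 R2; apply: sim_Zr.
- by move=> *; apply: sim_Wb.
- by move=> d1 f1 d2 f2 e He R1 R2; apply: sim_Wl.
- by move=> d1 f1 d2 f2 e He R1 R2; apply: sim_Wr.
Qed.

Lemma PS_reach (E Q1 Q2 : finType) (G1 : nfa E Q1) (G2 : nfa E Q2) p x p' :
  PS G1 G2 p x p' ->
  tpo_reach (det_d G1) (det G1) p.1 ->
  tpo_reach (det_d G2) (det G2) p.2 ->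
  tpo_reach (det_d G1) (det G1) p'.1 /\ tpo_reach (det_d G2) (det G2) p'.2.
Proof.
case: p => p1 p2 /= H R1 R2.
case: (psyncE H) => [[q1 [q2 [_ _ T1 T2 ->]]]|[[q1 [_ _ T1 ->]]|[q2 [_ _ T2 ->]]]] /=.
- split; [exact: reach_step R1 T1 | exact: reach_step R2 T2].
- split=> //; exact: reach_step R1 T1.
- split=> //; exact: reach_step R2 T2.
Qed.

Lemma main_path (E Q1 Q2 : finType) (G1 : nfa E Q1) (G2 : nfa E Q2) p s q :
  ~~ (UR G1 (ninit G1) \subset nsecret G1) ->
  ~~ (UR G2 (ninit G2) \subset nsecret G2) ->
  lpath (PS G1 G2) p s q -> forall m, Rel G1 G2 p m ->
  tpo_reach (det_d G1) (det G1) p.1 ->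
  tpo_reach (det_d G2) (det G2) p.2 ->
  exists q', lpath (tpo_rel (det_d (nsync G1 G2)) (det (nsync G1 G2))) m (map (@rho E) s) q'.
Proof.
move=> I1 I2; elim=> [x|x l y s' z Hxy _ IH] m HR R1 R2.
- by exists m; apply: lp_nil.
- case: (sim_step I1 I2 HR R1 R2 Hxy) => m' [Hm HR'].
  case: (PS_reach Hxy R1 R2) => R1' R2'.
  case: (IH m' HR' R1' R2') => q' Hq'.
  by exists q'; apply: lp_cons Hq'.
Qed.

Theorem theorem4 (E Q1 Q2 : finType) (G1 : nfa E Q1) (G2 : nfa E Q2) :
  nfa_wf G1 -> nfa_wf G2 ->
  ~~ (UR G1 (ninit G1) \subset nsecret G1) ->
  ~~ (UR G2 (ninit G2) \subset nsecret G2) ->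
  forall s : seq (sym E),
  (forall x, List.In x s -> gT_alph G1 (alph G2) x \/ gT_alph G2 (alph G1) x) ->
  (exists q, lpath (psync (gT_alph G1 (alph G2)) (gT_trans G1 (alph G2))
                          (gT_alph G2 (alph G1)) (gT_trans G2 (alph G1)))
                   (gT_init G1, gT_init G2) s q) ->
  exists q, lpath (tpo_rel (det_d (nsync G1 G2)) (det (nsync G1 G2)))
                  (tpo_init (det_d (nsync G1 G2)) (det (nsync G1 G2)))
                  (map (@rho E) s) q.
Proof.
move=> _ _ I1 I2 s _ [q Hq].
apply: (main_path I1 I2 (p := (gT_init G1, gT_init G2)) Hq).
- rewrite /tpo_init /gT_init /tpo_init /= UR_setX; exact: R_Y.
- by exists [::]; apply: lp_nil.
- by exists [::]; apply: lp_nil.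
Qed.
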